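(* Let $p$ be a permutation of length $t\ge 1$. For $k\ge 0$ and $m\ge 0$ let $A_{k,m}$ be the number of permutations in $\mathcal{S}_k$ that contain exactly $m$ occurrences of $p$ as a classical pattern (with $A_{0,0}=1$ and $A_{0,m}=0$ for $m\ge 1$). For $N\ge 1$, an occurrence of the place-difference-value pattern $P=(p,(\mathbb{O},\mathbb{E},\ldots,\mathbb{E}),\emptyset,(\mathbb{E},\ldots,\mathbb{E}))$ in $\pi=\pi_1\cdots\pi_N\in\mathcal{S}_N$ is a sequence of indices $i_1<\cdots<i_t$ such that every $i_j$ is odd, every value $\pi_{i_j}$ is even, and $\pi_{i_1}\cdots\pi_{i_t}$ is order isomorphic to $p$. Let $B_{N,m}$ be the number of permutations in $\mathcal{S}_N$ with exactly $m$ occurrences of $P$. Then for all $n\ge 1$ and $m\ge 0$, $$B_{2n,m}=\sum_{k=0}^{n} n!\,(n-k)!\binom{n}{k}^{3}A_{k,m}.$$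
   Context: $\mathcal{S}_n$ denotes the set of permutations of $\{1,\dots,n\}$, written as words $\pi_1\cdots\pi_n$. $\mathbb{E}$ and $\mathbb{O}$ denote the even and odd numbers. A permutation $\sigma$ occurs (as a classical pattern) in $\pi$ at indices $i_1<\dots<i_t$ if $\pi_{i_1}\cdots\pi_{i_t}$ is order isomorphic to $\sigma$; the number of occurrences is the number of such index sequences. In the place-difference-value language, $P$ has place sets $X_0=\mathbb{O}$ (so $i_1$ is odd) and $X_j=\mathbb{E}$ for $j\ge1$ (consecutive chosen positions, and $i_t$ and $N+1$, differ by an even number), no difference conditions, and value sets all equal to $\mathbb{E}$. *)

(* Defs.v *)
From mathcomp Require Import all_boot all_order all_fingroup.
Set Implicit Arguments.
Unset Strict Implicit.
Unset Printing Implicit Defensive.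

(* Permutations of {1..N} are modelled as 'S_N = {perm 'I_N}, i.e. on {0..N-1}.
   A position/value x : 'I_N (0-based) corresponds to x+1 in the paper's
   1-based convention.  Hence "paper index odd"  <-> ~~ odd (val x),
   and "paper value even" <-> odd (val x). *)

Definition strict_incr (t N : nat) (f : {ffun 'I_t -> 'I_N}) : bool :=
  [forall a : 'I_t, forall b : 'I_t, (a < b)%N ==> (f a < f b)%N].

Definition order_iso (t N : nat) (p : 'S_t) (pi : 'S_N) (f : {ffun 'I_t -> 'I_N}) : bool :=
  [forall a : 'I_t, forall b : 'I_t, (pi (f a) < pi (f b))%N == (p a < p b)%N].

Definition occ (t N : nat) (p : 'S_t) (pi : 'S_N) : nat :=
  #|[set f : {ffun 'I_t -> 'I_N} | strict_incr f && order_iso p pi f]|.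

Definition occP (t N : nat) (p : 'S_t) (pi : 'S_N) : nat :=
  #|[set f : {ffun 'I_t -> 'I_N} | [&& strict_incr f, order_iso p pi f,
      [forall j : 'I_t, ~~ odd (f j)] & [forall j : 'I_t, odd (pi (f j))]]]|.

Definition A (t : nat) (p : 'S_t) (k m : nat) : nat :=
  #|[set s : 'S_k | occ p s == m]|.

Definition B (t : nat) (p : 'S_t) (N m : nat) : nat :=
  #|[set s : 'S_N | occP p s == m]|.

(* Main.v *)
Require Import Defs.
From mathcomp Require Import all_boot all_order all_fingroup.
From mathcomp Require Import zify.
Set Implicit Arguments. Unset Strict Implicit. Unset Printing Implicit Defensive.

Section Count.
Variable T : finType.

Definition fixset (A C R : {set T}) (h : T -> T) : {set {perm T}} :=
  [set s : {perm T} | [forall x in A, s x == h x] && [forall x in C, s x \in R]].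

Lemma split_cnt (A C R R' : {set T}) h c : c \notin A ->
  #|[set s : {perm T} | [&& [forall x in A, s x == h x], s c \in R' & [forall x in C, s x \in R]]]|
  = \sum_(r in R') #|fixset (c |: A) C R (fun x => if x == c then r else h x)|.
Proof.
move=> cA.
rewrite -sum1_card (partition_big (fun s : {perm T} => s c) (mem R')) /=; last first.
  by move=> s; rewrite inE => /and3P[].
apply: eq_bigr => r Rr; rewrite sum1_card; apply: eq_card => s.
rewrite unfold_in /= !inE; apply/idP/idP.
- case/andP=> /and3P[/forall_inP HA _ HC] /eqP sc.
  rewrite HC andbT; apply/forall_inP => x; rewrite !inE.
  case: eqP => [-> _|_ /= xA]; first by rewrite sc.
  exact: HA.
- case/andP=> /forall_inP HA HC.
  have sc : s c = r by have := HA c; rewrite !inE eqxx /= => /(_ isT)/eqP.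
  rewrite sc Rr HC eqxx !andbT; apply/forall_inP => x xA.
  have := HA x; rewrite !inE xA orbT => /(_ isT).
  by case: (x =P c) => // xc; move: cA; rewrite -xc xA.
Qed.


Lemma hr_inj (A : {set T}) (h : T -> T) (c r : T) : c \notin A -> r \notin h @: A ->
  {in A &, injective h} ->
  {in c |: A &, injective (fun x => if x == c then r else h x)}.
Proof.
move=> cA rA hinj x y; rewrite !inE.
case: (x =P c) => [->|xc]; case: (y =P c) => [->|yc] //= xA yA.
- by move=> E; move: rA; rewrite E imset_f.
- by move=> E; move: rA; rewrite -E imset_f.
- exact: hinj.
Qed.

Lemma cnt k : forall (A C R : {set T}) h, #|T| - #|A| = k ->
  {in A, forall x, x \notin C} -> {in A &, injective h} ->
  {in A, forall x, h x \notin R} ->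
  #|fixset A C R h| = #|R| ^_ #|C| * (#|T| - #|A| - #|C|)`!.
Proof.
elim: k => [|k IH] A C R h hk AC hinj hR.
  have AT : A = setT.
    apply/eqP; rewrite eqEcard subsetT cardsT; move: (max_card A); lia.
  subst A.
  have C0 : C = set0.
    by apply/setP => x; rewrite inE; apply/negbTE/AC; rewrite inE.
  subst C.
  have hi : injective h by move=> x y; apply: hinj; rewrite inE.
  rewrite cards0 ffactn0 mul1n cardsT subnn.
  rewrite (_ : fixset _ _ _ _ = [set perm hi]) ?cards1 //.
  apply/setP => s; rewrite !inE; apply/idP/idP.
  - case/andP=> /forall_inP H _; apply/eqP/permP => x; rewrite permE.
    by apply/eqP/H; rewrite inE.
  - move/eqP ->; apply/andP; split; apply/forall_inP => x; rewrite ?inE ?permE //.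
case: (set_0Vmem C) => [C0 | [c cC]].
- subst C.
  have : ~~ ([set: T] \subset A).
    apply/negP => /subset_leq_card; rewrite cardsT; lia.
  case/subsetPn => c _ cA.
  have -> : fixset A set0 R h = [set s : {perm T} | [&& [forall x in A, s x == h x],
       s c \in ~: (h @: A) & [forall x in set0, s x \in (set0 : {set T})]]].
    apply/setP => s; rewrite !inE; apply/andP/and3P.
    - case=> /forall_inP H _; split => //; last by apply/forall_inP => x; rewrite inE.
      + by apply/forall_inP.
      + apply/imsetP => -[y yA] E; move: (H y yA) => /eqP E2.
        by rewrite -E2 in E; move/perm_inj: E => E; rewrite E yA in cA.
    - by case=> H _ _; split => //; apply/forall_inP => x; rewrite inE.
  rewrite split_cnt //.
  rewrite (eq_bigr (fun _ => (#|T| - #|A|).-1`!)); last first.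
    move=> r; rewrite inE => rA.
    rewrite IH.
    + by rewrite cards0 ffactn0 mul1n cardsU1 cA subn0 add1n subnS.
    + by rewrite cardsU1 cA; lia.
    + by move=> x _; rewrite inE.
    + exact: hr_inj.
    + by move=> x _; rewrite inE.
  rewrite sum_nat_const cards0 ffactn0 mul1n subn0.
  have : #|~: (h @: A)| = #|T| - #|A|.
    by rewrite -(cardsC (h @: A)) card_in_imset //; lia.
  move=> ->; rewrite hk /=; by rewrite factS.
- have cA : c \notin A by apply/negP => /AC; rewrite cC.
  have -> : fixset A C R h = [set s : {perm T} | [&& [forall x in A, s x == h x],
       s c \in R & [forall x in C :\ c, s x \in R]]].
    apply/setP => s; rewrite !inE; apply/andP/and3P.
    - case=> H /forall_inP H2; split => //; first exact: H2.
      by apply/forall_inP => x; rewrite inE => /andP[_ /H2].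
    - case=> H H1 /forall_inP H2; split => //; apply/forall_inP => x xC.
      by case: (x =P c) => [->//|/eqP xc]; apply: H2; rewrite !inE xc.
  rewrite split_cnt //.
  rewrite (eq_bigr (fun _ => (#|R| - 1) ^_ (#|C| - 1) * (#|T| - #|A| - #|C|)`!)); last first.
    move=> r Rr.
    have -> : fixset (c |: A) (C :\ c) R (fun x => if x == c then r else h x) =
              fixset (c |: A) (C :\ c) (R :\ r) (fun x => if x == c then r else h x).
      apply/setP => s; rewrite !inE; apply/andP/andP.
      - case=> /forall_inP H /forall_inP H2; split; first exact/forall_inP.
        apply/forall_inP => x xC; rewrite !inE H2 // andbT.
        have := H c; rewrite !inE eqxx => /(_ isT)/eqP <-.
        rewrite (inj_eq perm_inj); by move: xC; rewrite !inE => /andP[].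
      - case=> H /forall_inP H2; split => //; apply/forall_inP => x xC.
        by move: (H2 x xC); rewrite inE => /andP[].
    rewrite IH.
    + rewrite (cardsD1 r R) Rr (cardsD1 c C) cC cardsU1 cA /= !addKn.
      by have -> : #|T| - (1 + #|A|) - #|C :\ c| = #|T| - #|A| - (1 + #|C :\ c|) by lia.
    + by rewrite cardsU1 cA; lia.
    + by move=> x; rewrite !inE => /orP[/eqP->|xA]; rewrite ?eqxx // andbC; rewrite (negbTE (AC x xA)).
    + apply: hr_inj => //; apply/imsetP => -[y yA E]; move: (hR y yA); by rewrite -E Rr.
    + move=> x; rewrite !inE; case: (x =P c) => [_ _|_ /= xA]; first by rewrite eqxx.
      by rewrite (negbTE (hR x xA)) andbF.
  rewrite sum_nat_const mulnA; congr (_ * _).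
  by rewrite (cardsD1 c C) cC /= add1n subn1 /= ffactnS subn1.
Qed.
End Count.


Definition eK (N : nat) (d : 'I_N) (K : {set 'I_N}) (i : nat) : 'I_N := nth d (enum K) i.

Lemma enum_sorted N (A : {set 'I_N}) : sorted ltn (map val (enum A)).
Proof.
rewrite -[enum _](eq_filter (mem_enum _)).
rewrite -(eq_filter (mem_map val_inj _)) -filter_map.
by rewrite (sorted_filter ltn_trans) // unlock val_ord_enum iota_ltn_sorted.
Qed.

Lemma eK_lt N (d : 'I_N) (K : {set 'I_N}) i j : i < #|K| -> j < #|K| -> i < j ->
  val (eK d K i) < val (eK d K j).
Proof.
move=> hi hj hij; rewrite /eK -!(nth_map d (val d)) -?cardE //.
apply: (sorted_ltn_nth ltn_trans (val d) (enum_sorted K)) => //;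
  by rewrite inE size_map -cardE.
Qed.

Lemma eK_mono N (d : 'I_N) (K : {set 'I_N}) i j : i < #|K| -> j < #|K| ->
  (val (eK d K i) < val (eK d K j)) = (i < j).
Proof.
move=> hi hj; case: (ltnP i j) => hij; first exact: eK_lt.
case: (ltngtP j i) hij => // [hji _|-> _]; last by rewrite ltnn.
by apply/negbTE; rewrite -leqNgt ltnW // eK_lt.
Qed.

Lemma eK_in N (d : 'I_N) (K : {set 'I_N}) i : i < #|K| -> eK d K i \in K.
Proof. by move=> hi; rewrite -mem_enum mem_nth // -cardE. Qed.

Lemma eK_inj N (d : 'I_N) (K : {set 'I_N}) i j : i < #|K| -> j < #|K| -> eK d K i = eK d K j -> i = j.
Proof.
move=> hi hj /eqP; rewrite /eK nth_uniq ?enum_uniq -?cardE //; exact/eqP.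
Qed.

Lemma eK_index N (d : 'I_N) (K : {set 'I_N}) x : x \in K -> eK d K (index x (enum K)) = x.
Proof. by move=> xK; rewrite /eK nth_index // mem_enum. Qed.

Lemma index_lt N (K : {set 'I_N}) x : x \in K -> index x (enum K) < #|K|.
Proof. by move=> xK; rewrite cardE index_mem mem_enum. Qed.

Lemma pat_lemma t (p : 'S_t) (ht : 0 < t) N (d : 'I_N) (pi : 'S_N) k (s : 'S_k)
  (K V : {set 'I_N}) : #|K| = k -> #|V| = k ->
  (forall i : 'I_k, pi (eK d K i) = eK d V (s i)) ->
  #|[set f : {ffun 'I_t -> 'I_N} | [&& strict_incr f, order_iso p pi f &
        [forall j, f j \in K]]]| = occ p s.
Proof.
move=> hK hV H.
have key (i j : 'I_k) : (pi (eK d K i) < pi (eK d K j)) = (s i < s j).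
  by rewrite !H eK_mono // hV.
case: k s hK hV H key => [|k] s hK hV H key.
  rewrite /occ !eq_card0 // => f; rewrite inE.
    by case: (f (Ordinal ht)).
  apply/negP => /and3P[_ _ /forallP /(_ (Ordinal ht))].
  by move/card0_eq: hK => ->.
rewrite /occ.
pose phi (g : {ffun 'I_t -> 'I_k.+1}) : {ffun 'I_t -> 'I_N} := [ffun j => eK d K (g j)].
have phi_inj : injective phi.
  move=> g1 g2 E; apply/ffunP => j; apply: val_inj.
  by have := congr1 (fun f : {ffun _ -> _} => f j) E; rewrite /phi !ffunE; apply: eK_inj; rewrite hK.
rewrite -(card_imset _ phi_inj); apply: eq_card => f; rewrite !inE.
apply/idP/imsetP.
- case/and3P => /forallP Hs /forallP Ho /forallP HK.
  pose g := [ffun j => inord (index (f j) (enum K)) : 'I_k.+1].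
  have gE j : eK d K (g j) = f j.
    by rewrite ffunE inordK ?eK_index // -hK index_lt.
  exists g; last by apply/ffunP => j; rewrite ffunE gE.
  rewrite inE; apply/andP; split; apply/forallP => a; [apply/forallP => b|apply/forallP => b].
  + apply/implyP => ab; move: (implyP (forallP (Hs a) b) ab).
    by rewrite -!gE eK_mono // hK.
  + by rewrite -key !gE; apply: (forallP (Ho a) b).
- case=> g; rewrite inE => /andP[/forallP Hs /forallP Ho] ->.
  apply/and3P; split; apply/forallP => a; rewrite ?ffunE.
  + apply/forallP => b; rewrite !ffunE; apply/implyP => ab.
    by rewrite eK_mono ?hK // (implyP (forallP (Hs a) b) ab).
  + apply/forallP => b; rewrite !ffunE key; exact: (forallP (Ho a) b).
  + by apply: eK_in; rewrite hK.
Qed.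


Section Main.
Variable n : nat.
Hypothesis hn : 0 < n.
Local Notation N := (2 * n).
Variable d : 'I_N.

Definition EE : {set 'I_N} := [set i : 'I_N | ~~ odd i].
Definition FF : {set 'I_N} := [set i : 'I_N | odd i].
Definition Kp (pi : 'S_N) : {set 'I_N} := [set x : 'I_N | ~~ odd x && odd (pi x)].

Lemma card_EE : #|EE| = n.
Proof.
pose g (i : 'I_n) : 'I_N := insubd d (2 * i).
have gv i : val (g i) = 2 * i by rewrite val_insubd ltn_pmul2l // ltn_ord.
have ginj : injective g by move=> i j /(congr1 val); rewrite !gv => /eqP; rewrite eqn_pmul2l // => /eqP /val_inj.
rewrite (_ : EE = g @: setT) ?card_imset ?cardsT ?card_ord //.
apply/setP => x; rewrite !inE; apply/idP/imsetP.
- move=> ex; have hx : x./2 < n by move: (ltn_ord x); lia.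
  exists (Ordinal hx) => //; apply: val_inj; rewrite gv /=.
  by rewrite -{1}(odd_double_half x) (negbTE ex) add0n -muln2 mulnC.
- by case=> i _ ->; rewrite gv oddM.
Qed.

Lemma card_FF : #|FF| = n.
Proof.
have : #|EE| + #|~: EE| = N by rewrite cardsC card_ord.
rewrite card_EE (_ : ~: EE = FF); first lia.
by apply/setP => x; rewrite !inE negbK.
Qed.

Lemma card_nFF : #|~: FF| = n.
Proof. have := cardsC FF; rewrite card_FF card_ord; lia. Qed.

Lemma occP_eq t (p : 'S_t) pi : occP p pi =
  #|[set f : {ffun 'I_t -> 'I_N} | [&& strict_incr f, order_iso p pi f &
        [forall j, f j \in Kp pi]]]|.
Proof.
apply: eq_card => f; rewrite !inE; congr (_ && (_ && _)).
apply/andP/forallP => [[/forallP H1 /forallP H2] j|H]; first by rewrite inE H1 H2.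
by split; apply/forallP => j; have := H j; rewrite inE => /andP[].
Qed.


Definition Y k (K V : {set 'I_N}) (s : 'S_k) : {set 'S_N} :=
  [set pi : 'S_N | [forall i : 'I_k, pi (eK d K i) == eK d V (s i)] &&
                   [forall x in EE :\: K, pi x \in ~: FF]].

Lemma eK_surj k (K : {set 'I_N}) (hK : #|K| = k) x : x \in K ->
  exists i : 'I_k, x = eK d K i.
Proof.
move=> xK; have h : index x (enum K) < k by rewrite -hK index_lt.
by exists (Ordinal h); rewrite eK_index.
Qed.

Lemma index_eK (K : {set 'I_N}) i : i < #|K| -> index (eK d K i) (enum K) = i.
Proof. by move=> hi; rewrite /eK index_uniq ?enum_uniq // -cardE. Qed.

Lemma card_Y k (K V : {set 'I_N}) (s : 'S_k) : K \subset EE -> #|K| = k ->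
  V \subset FF -> #|V| = k -> #|Y K V s| = n ^_ (n - k) * n`!.
Proof.
move=> KE hK VF hV.
pose hf x := oapp (fun i : 'I_k => eK d V (s i)) x (insub (index x (enum K))).
have hfE (i : 'I_k) : hf (eK d K i) = eK d V (s i).
  by rewrite /hf index_eK ?hK // valK.
rewrite (_ : Y K V s = fixset K (EE :\: K) (~: FF) hf); last first.
  apply/setP => pi; rewrite !inE; congr (_ && _).
  apply/forallP/forall_inP => [H x xK|H i].
  - by have [i ->] := eK_surj hK xK; rewrite hfE; apply: H.
  - by rewrite -hfE; apply: H; apply: eK_in; rewrite hK.
rewrite (@cnt _ _ K (EE :\: K) (~: FF) hf erefl).
- have kn : k <= n by have := card_EE; have := subset_leq_card KE; lia.
  rewrite card_nFF cardsD (setIidPr KE) card_EE hK card_ord.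
  by have -> : 2 * n - k - (n - k) = n by lia.
- by move=> x xK; rewrite !inE xK.
- move=> x y xK yK; have [i ->] := eK_surj hK xK; have [j ->] := eK_surj hK yK.
  rewrite !hfE => /eK_inj; rewrite hV => /(_ (ltn_ord _) (ltn_ord _)) E.
  by have /perm_inj -> : s i = s j by apply: val_inj.
- move=> x xK; have [i ->] := eK_surj hK xK; rewrite hfE inE negbK.
  by apply: (subsetP VF); apply: eK_in; rewrite hV.
Qed.

Definition SK k : {set {set 'I_N}} := [set K : {set 'I_N} | K \subset EE & #|K| == k].
Definition SV k : {set {set 'I_N}} := [set K : {set 'I_N} | K \subset FF & #|K| == k].

Lemma Yimp k (K V : {set 'I_N}) (s : 'S_k) pi : K \in SK k -> V \in SV k ->
  pi \in Y K V s -> K = Kp pi /\ V = pi @: Kp pi.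
Proof.
rewrite !inE => /andP[KE /eqP hK] /andP[VF /eqP hV] /andP[/forallP H1 /forall_inP H2].
have piK x : x \in K -> pi x \in V.
  move=> xK; have [i ->] := eK_surj hK xK; rewrite (eqP (H1 i)).
  by apply: eK_in; rewrite hV.
have KK : K = Kp pi.
  apply/setP => x; rewrite !inE; apply/idP/idP.
  - move=> xK; have := subsetP KE x xK; rewrite inE => ->.
    by have := subsetP VF _ (piK x xK); rewrite inE.
  - case/andP => ex ox; apply/negPn/negP => xK.
    by have := H2 x; rewrite !inE xK ex ox => /(_ isT).
split => //; rewrite -KK; apply/eqP; rewrite eq_sym eqEcard.
rewrite card_imset; last exact: perm_inj.
rewrite hK hV leqnn andbT; apply/subsetP => y /imsetP[x xK ->]; exact: piK.
Qed.

Lemma sum_pi t (p : 'S_t) (ht : 0 < t) m pi k :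
  \sum_(K in SK k) \sum_(V in SV k) \sum_(s : 'S_k)
     nat_of_bool ((pi \in Y K V s) && (occ p s == m)) =
  nat_of_bool ((#|Kp pi| == k) && (occP p pi == m)).
Proof.
case: (#|Kp pi| =P k) => hk; last first.
  apply: big1 => K KS; apply: big1 => V VS; apply: big1 => s _.
  case: (boolP (pi \in Y K V s)) => // hy.
  by have [E _] := Yimp KS VS hy; move: KS; rewrite !inE E => /andP[_ /eqP].

set K0 := Kp pi; set V0 := pi @: K0.
have K0E : K0 \subset EE by apply/subsetP => x; rewrite !inE => /andP[].
have hV0 : #|V0| = k by rewrite card_imset //; exact: perm_inj.
have V0F : V0 \subset FF.
  by apply/subsetP => y /imsetP[x]; rewrite !inE => /andP[_ o] ->.
have K0in : K0 \in SK k by rewrite inE K0E hk eqxx.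
have V0in : V0 \in SV k by rewrite inE V0F hV0 eqxx.
rewrite (bigD1 K0) //= [X in _ + X]big1 ?addn0; last first.
  move=> K /andP[KS KK]; apply: big1 => V VS; apply: big1 => s _.
  case: (boolP (pi \in Y K V s)) => // hy.
  by have [E _] := Yimp KS VS hy; rewrite E eqxx in KK.
rewrite (bigD1 V0) //= [X in _ + X]big1 ?addn0; last first.
  move=> V /andP[VS VV]; apply: big1 => s _.
  case: (boolP (pi \in Y K0 V s)) => // hy.
  by have [_ E] := Yimp K0in VS hy; rewrite E eqxx in VV.
have memV0 (i : 'I_k) : pi (eK d K0 i) \in V0.
  by apply: imset_f; apply: eK_in; rewrite hk.
pose f0 := [ffun i : 'I_k => insubd i (index (pi (eK d K0 i)) (enum V0))].
have f0v i : val (f0 i) = index (pi (eK d K0 i)) (enum V0).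
  by have := index_lt (memV0 i); rewrite hV0 ffunE val_insubd => ->.
have f0E i : eK d V0 (f0 i) = pi (eK d K0 i) by rewrite f0v eK_index.
have f0inj : injective f0.
  move=> i j E; have := f0E i; rewrite E f0E => /perm_inj/eK_inj.
  by rewrite hk => /(_ (ltn_ord _) (ltn_ord _)) /val_inj.
pose s0 := perm f0inj.
have H0 (i : 'I_k) : pi (eK d K0 i) = eK d V0 (s0 i) by rewrite permE f0E.
have Ys s : (pi \in Y K0 V0 s) = (s == s0).
  rewrite inE; have -> : [forall x in EE :\: K0, pi x \in ~: FF].
    by apply/forall_inP => x; rewrite !inE => /andP[/negP xK ex]; apply/negP => ox; apply: xK; rewrite ex.
  rewrite andbT; apply/forallP/eqP => [H|->]; last by move=> i; rewrite H0.
  apply/permP => i; have := eqP (H i); rewrite H0 => /eK_inj.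
  by rewrite hV0 => /(_ (ltn_ord _) (ltn_ord _)) /val_inj.
rewrite (bigD1 s0) //= [X in _ + X]big1 ?addn0; last first.
  by move=> s ss; rewrite Ys (negbTE ss).
rewrite Ys eqxx /=.
by rewrite occP_eq (pat_lemma p ht hk hV0 H0).
Qed.

Lemma sum_boolc (T : finType) (P : pred T) :
  \sum_(x : T) nat_of_bool (P x) = #|[set x | P x]|.
Proof.
rewrite -sum1_card [RHS]big_mkcond /=; apply: eq_bigr => x _; rewrite inE; by case: (P x).
Qed.

Lemma sum_boolY (T : finType) (S : {set T}) b :
  \sum_(x : T) nat_of_bool ((x \in S) && b) = b * #|S|.
Proof.
case: b; last by rewrite big1 // => x _; rewrite andbF.
rewrite mul1n -sum1_card [RHS]big_mkcond /=; apply: eq_bigr => x _; rewrite andbT; by case: (x \in S).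
Qed.

Lemma main_sec t (p : 'S_t) (ht : 0 < t) m :
  B p N m = \sum_(0 <= k < n.+1) n`! * (n - k)`! * 'C(n, k) ^ 3 * A p k m.
Proof.
rewrite /B -sum_boolc.
rewrite (eq_bigr (fun pi => \sum_(k < n.+1) \sum_(K in SK k) \sum_(V in SV k) \sum_(s : 'S_k)
     nat_of_bool ((pi \in Y K V s) && (occ p s == m)))); last first.
  move=> pi _.
  have kle : #|Kp pi| < n.+1.
    rewrite ltnS; have := card_EE; have : Kp pi \subset EE.
      by apply/subsetP => x; rewrite !inE => /andP[].
    move/subset_leq_card; lia.
  rewrite (bigD1 (Ordinal kle)) //= sum_pi // eqxx /= [X in _ + X]big1 ?addn0 //.
  move=> k kk; rewrite sum_pi //; case: (#|Kp pi| =P k) => //= E.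
  by move: kk; rewrite -val_eqE /= E eqxx.
rewrite exchange_big big_mkord; apply: eq_bigr => k _.
rewrite exchange_big /= (eq_bigr (fun K => 'C(n, k) * (A p k m * (n ^_ (n - k) * n`!)))); last first.
  move=> K KS; rewrite exchange_big /= (eq_bigr (fun V => A p k m * (n ^_ (n - k) * n`!))); last first.
    move=> V VS; rewrite exchange_big /=.
    rewrite (eq_bigr (fun s : 'S_k => nat_of_bool (occ p s == m) * (n ^_ (n - k) * n`!))); last first.
      move=> s _; rewrite (eq_bigr (fun pi => nat_of_bool ((pi \in Y K V s) && (occ p s == m)))) //.
      rewrite sum_boolY; move: KS VS; rewrite !inE => /andP[KE /eqP hK] /andP[VF /eqP hV].
      by rewrite (card_Y s KE hK VF hV).
    by rewrite -big_distrl /= sum_boolc.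
  by rewrite sum_nat_const /SV cards_draws card_FF.
rewrite sum_nat_const /SK cards_draws card_EE.
have kn : k <= n by rewrite -ltnS ltn_ord.
rewrite -(bin_sub kn) -bin_ffact (bin_sub kn).
set a := 'C(n, k); set b := A p k m; set c := n`!; set e := (n - k)`!.
rewrite (_ : a ^ 3 = a * a * a); last by rewrite !expnS expn0 muln1 mulnA.
lia.
Qed.
End Main.

Theorem mainTheorem1 (t : nat) (p : 'S_t) (ht : (1 <= t)%N) (n m : nat)
  (hn : (1 <= n)%N) :
  B p (2 * n) m =
  (\sum_(0 <= k < n.+1) n`! * (n - k)`! * 'C(n, k) ^ 3 * A p k m)%N.
Proof.
have h0 : 0 < 2 * n by rewrite muln_gt0.
exact: (main_sec hn (Ordinal h0) p ht m).
Qed.
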